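(* Let $P$ be an enhanced Gelfand--Zetlin pattern with top row $\lambda$, viewed as a graph whose vertices are its entries and whose edges are its edges. Then: (1) two entries of row $0$ belong to the same connected component if and only if they have the same value; (2) each connected component either has a unique highest vertex (a unique vertex in its row of smallest index) or contains at least one entry of row $0$; (3) all vertices of a connected component, possibly except the highest one, are encircled; in particular, the number of connected components is at least the number of distinct values among $\lambda_1,\dots,\lambda_n$ plus the number of non-encircled entries.
   Context: Let $\lambda=(\lambda_1\ge\dots\ge\lambda_n)$ be a partition. A GZ pattern with top row $\lambda$ is an integer array $a_{ij}$, $0\le i\le n-1$, $1\le j\le n-i$ (row $0$ is the top row), with $a_{0j}=\lambda_{n+1-j}$ and $a_{i-1,j}\le a_{ij}\le a_{i-1,j+1}$ ($a_{ij}$ sits below $a_{i-1,j}$ and $a_{i-1,j+1}$). An enhanced GZ pattern is such an array with a set of encircled entries and a set of edges, each joining an $a_{ij}$ ($i\ge1$) with $a_{i-1,j}$ or $a_{i-1,j+1}$, such that: (1) row $0$ entries are encircled; (2) entries joined by an edge are equal and the lower one is encircled; (3) for $i\ge1$, $1\le j\le n-i-1$: both $a_{ij},a_{i,j+1}$ are joined to $a_{i-1,j+1}$ iff both are joined to $a_{i+1,j}$; (4) if $a_{0j}=a_{0,j+1}$ then $a_{1j}$ is encircled and joined to both; (5) if $a_{i-1,j}<a_{i-1,j+1}$ and $a_{ij}=a_{i-1,j}$, then $a_{ij}$ is encircled and joined to $a_{i-1,j}$; (6) if $a_{i-1,j}<a_{i-1,j+1}$, $a_{ij}=a_{i-1,j+1}$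 and $a_{ij}$ is encircled, then it is joined to $a_{i-1,j+1}$; (7) if $a_{i-1,j}=a_{i-1,j+1}=a_{ij}$ and $a_{i-1,j},a_{i-1,j+1}$ can be connected by a path of edges, then $a_{ij}$ is encircled and joined to both; (8) if $a_{i-1,j}=a_{i-1,j+1}=a_{ij}$ and $a_{ij}$ is encircled, then it is joined to at least one of them. *)

(* Defs.v *)
From HB Require Import structures.
From mathcomp Require Import all_boot all_order all_algebra.
Set Implicit Arguments. Unset Strict Implicit. Unset Printing Implicit Defensive.
Import Order.TTheory GRing.Theory Num.Theory.

(* Conventions: rows i are 0-indexed (prow 0 = top prow), columns j are
   1-indexed as in the paper: entry a_{ij} exists iff 0 <= i <= n-1 and
   1 <= j <= n-i.  The partition lambda is lam : nat -> int, 1-indexed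
   (lam 1 >= ... >= lam n >= 0).
   An enhanced pattern is given by
     a   : nat -> nat -> int   (entries),
     enc : nat -> nat -> bool  (encircled entries),
     eL i j : a_{ij} (i >= 1) is joined by an edge to a_{i-1,j},
     eR i j : a_{ij} (i >= 1) is joined by an edge to a_{i-1,j+1}.
   Values outside the valid index range are irrelevant. *)

Definition valid (n i j : nat) : bool := [&& i < n, 0 < j & i + j <= n].

Definition pos (n : nat) :=
  {p : 'I_n * 'I_n.+1 | (0 < p.2) && (p.1 + p.2 <= n)}.

Definition prow {n} (p : pos n) : nat := (val p).1.
Definition pcol {n} (p : pos n) : nat := (val p).2.

Definition gz_adj n (eL eR : nat -> nat -> bool) : rel (pos n) :=
  fun p q =>
    [|| [&& (prow q).+1 == prow p, pcol q == pcol p & eL (prow p) (pcol p)],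
        [&& (prow q).+1 == prow p, pcol q == (pcol p).+1 & eR (prow p) (pcol p)],
        [&& (prow p).+1 == prow q, pcol p == pcol q & eL (prow q) (pcol q)]
      | [&& (prow p).+1 == prow q, pcol p == (pcol q).+1 & eR (prow q) (pcol q)]].

Definition gz_conn n (eL eR : nat -> nat -> bool) (p q : pos n) : bool :=
  connect (gz_adj eL eR) p q.

Definition is_partition (n : nat) (lam : nat -> int) : Prop :=
  (forall k, 0 < k < n -> (lam k.+1 <= lam k)%R) /\ (0 < n -> (0 <= lam n)%R).

Definition is_GZ n (lam : nat -> int) (a : nat -> nat -> int) : Prop :=
  (forall j, 0 < j <= n -> a 0 j = lam (n.+1 - j)) /\
  (forall i j, 0 < i -> valid n i j ->
     (a i.-1 j <= a i j)%R /\ (a i j <= a i.-1 j.+1)%R).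

Definition is_enhanced_GZ n (lam : nat -> int) (a : nat -> nat -> int)
    (enc eL eR : nat -> nat -> bool) : Prop :=
  is_GZ n lam a /\
  (* (1) *) (forall j, valid n 0 j -> enc 0 j) /\
  (* (2) *) (forall i j, 0 < i -> valid n i j ->
               (eL i j -> a i j = a i.-1 j /\ enc i j) /\
               (eR i j -> a i j = a i.-1 j.+1 /\ enc i j)) /\
  (* (3) *) (forall i j, 0 < i -> 0 < j -> j <= n - i - 1 ->
               (eR i j && eL i j.+1) = (eL i.+1 j && eR i.+1 j)) /\
  (* (4) *) (forall j, 0 < j -> j < n -> a 0 j = a 0 j.+1 ->
               [&& enc 1 j, eL 1 j & eR 1 j]) /\
  (* (5) *) (forall i j, 0 < i -> valid n i j ->
               (a i.-1 j < a i.-1 j.+1)%R -> a i j = a i.-1 j ->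
               enc i j && eL i j) /\
  (* (6) *) (forall i j, 0 < i -> valid n i j ->
               (a i.-1 j < a i.-1 j.+1)%R -> a i j = a i.-1 j.+1 ->
               enc i j -> eR i j) /\
  (* (7) *) (forall p q r : pos n,
               prow p = prow q -> pcol q = (pcol p).+1 ->
               prow r = (prow p).+1 -> pcol r = pcol p ->
               a (prow p) (pcol p) = a (prow q) (pcol q) ->
               a (prow q) (pcol q) = a (prow r) (pcol r) ->
               gz_conn eL eR p q ->
               [&& enc (prow r) (pcol r), eL (prow r) (pcol r) & eR (prow r) (pcol r)]) /\
  (* (8) *) (forall i j, 0 < i -> valid n i j ->
               a i.-1 j = a i.-1 j.+1 -> a i.-1 j.+1 = a i j ->
               enc i j -> eL i j || eR i j).

Definition gz_components n (eL eR : nat -> nat -> bool) : {set {set pos n}} :=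
  [set [set q | gz_conn eL eR p q] | p : pos n].

(* Main.v *)
Require Import Defs.
From HB Require Import structures.
From mathcomp Require Import all_boot all_order all_algebra.
From mathcomp Require Import zify.
Import Order.TTheory GRing.Theory Num.Theory.
Set Implicit Arguments. Unset Strict Implicit. Unset Printing Implicit Defensive.

Lemma connect_rect (T : finType) (e : rel T) (P : T -> Prop) y :
  P y -> (forall x z, e x z -> P z -> P x) -> forall x, connect e x y -> P x.
Proof.
move=> Py step x /connectP [p]; elim: p x => [|z p IH] x /=.
  by move=> _ /= hy; rewrite -hy.
by move=> /andP [exz pz] ly; apply: step exz (IH _ pz ly).
Qed.

Section GZ.
Variables (n : nat) (lam : nat -> int) (a : nat -> nat -> int) (enc eL eR : nat -> nat -> bool).

Lemma pos_eq (p q : pos n) : prow p = prow q -> pcol p = pcol q -> p = q.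
Proof.
move=> h1 h2; apply: val_inj.
case: p q h1 h2 => [[x1 y1] hp] [[x2 y2] hq]; rewrite /prow /pcol /= => h1 h2.
by congr pair; apply: val_inj.
Qed.

Lemma posV (p : pos n) : valid n (prow p) (pcol p).
Proof.
case: p => [[x y] h]; rewrite /valid /prow /pcol /=; case/andP: (h) => h1 h2.
by rewrite ltn_ord h1 h2.
Qed.

Lemma mkpos i j : valid n i j -> exists p : pos n, prow p = i /\ pcol p = j.
Proof.
case/and3P => hi hj hij.
have hj' : j < n.+1 by lia.
have H : (0 < (Ordinal hi, Ordinal hj').2) && ((Ordinal hi, Ordinal hj').1 + (Ordinal hi, Ordinal hj').2 <= n).
  by rewrite /= hj hij.
by exists (exist _ (Ordinal hi, Ordinal hj') H).
Qed.

Definition up : rel (pos n) := fun p q =>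
  ((prow q).+1 == prow p) &&
  ((pcol q == pcol p) && eL (prow p) (pcol p) || (pcol q == (pcol p).+1) && eR (prow p) (pcol p)).

Lemma adjE p q : gz_adj eL eR p q = up p q || up q p.
Proof.
rewrite /gz_adj /up.
case: (_.+1 == _); case: (_.+1 == _); case: (pcol q == pcol p); case: (pcol p == pcol q);
  case: (pcol q == _.+1); case: (pcol p == _.+1); rewrite /= ?orbF ?andbF ?orbA //=.
Qed.

Hypothesis HE : is_enhanced_GZ n lam a enc eL eR.

Inductive upc : pos n -> pos n -> Prop :=
| upc0 x : upc x x
| upcS x y z : up x y -> upc y z -> upc x z.

Lemma upc_trans x y z : upc x y -> upc y z -> upc x z.
Proof. by elim=> // x1 y1 z1 h _ IH /IH; apply: upcS. Qed.

Lemma upc1 x y : up x y -> upc x y.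
Proof. by move=> h; apply: upcS h (upc0 _). Qed.

Lemma up_row x y : up x y -> (prow y).+1 = prow x.
Proof. by case/andP => /eqP. Qed.

Lemma upc_row x y : upc x y -> prow y <= prow x /\ (prow y = prow x -> x = y).
Proof.
elim=> // x1 y1 z1 /up_row h _ [IH1 IH2]; split; first lia.
move=> e; lia.
Qed.

Lemma row0_upc x y : prow x = 0 -> upc x y -> y = x.
Proof. by move=> h0 h; case: h h0 => // x1 y1 z1 /up_row <-. Qed.

Lemma up_enc x y : up x y -> enc (prow x) (pcol x).
Proof.
case: HE => _ [_ [H2 _]] hu.
have h0 : 0 < prow x by have := up_row hu; lia.
have [hL hR] := H2 _ _ h0 (posV x).
case/andP: hu => _ /orP [] /andP [_ h].
  by case: (hL h).
by case: (hR h).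
Qed.

Lemma upc_enc x z : upc x z -> x <> z -> enc (prow x) (pcol x).
Proof. by case=> // x1 y1 z1 h _ _; apply: up_enc h. Qed.

Lemma adj_sym : symmetric (@gz_adj n eL eR).
Proof. by move=> p q; rewrite !adjE orbC. Qed.

Lemma conn_sym p q : @gz_conn n eL eR p q = gz_conn eL eR q p.
Proof. by rewrite /gz_conn (sym_connect_sym (@adj_sym)). Qed.

Lemma conn_trans (p q r : pos n) : gz_conn eL eR p q -> gz_conn eL eR q r -> gz_conn eL eR p r.
Proof. exact: connect_trans. Qed.

Lemma up_conn x y : up x y -> gz_conn eL eR x y.
Proof. by move=> h; apply: connect1; rewrite adjE h. Qed.

Lemma upc_conn x y : upc x y -> gz_conn eL eR x y.
Proof.
elim=> [x1|x1 y1 z1 h _ IH]; first exact: connect0.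
exact: conn_trans (up_conn h) IH.
Qed.

Definition reach0 (x : pos n) := exists r, upc x r /\ prow r = 0.
Definition joinable (x y : pos n) := (exists w, upc x w /\ upc y w) \/ (reach0 x /\ reach0 y).

Lemma lconf_aux (x y z : pos n) : pcol y = pcol x -> pcol z = (pcol x).+1 ->
  prow y = (prow x).-1 -> prow z = (prow x).-1 -> 1 < prow x ->
  eL (prow x) (pcol x) -> eR (prow x) (pcol x) ->
  exists t, up y t /\ up z t.
Proof.
case: HE => _ [_ [_ [H3 _]]] cy cz ry rz hx el er.
have vx := posV x; case/and3P: vx => v1 v2 v3.
have hi : 0 < (prow x).-1 by lia.
have hj : pcol x <= n - (prow x).-1 - 1 by lia.
have := H3 _ _ hi v2 hj; rewrite (ltn_predK hx) el er => /andP [e1 e2].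
have [t [rt ct]] : exists t : pos n, prow t = (prow x).-1.-1 /\ pcol t = (pcol x).+1.
  by apply: mkpos; rewrite /valid; apply/and3P; split; lia.
exists t; rewrite /up rt ct cy cz ry rz; split; apply/andP; split.
- by apply/eqP; lia.
- by rewrite eqxx e1 orbT.
- by apply/eqP; lia.
- by rewrite eqxx e2.
Qed.

Lemma lconf x y z : up x y -> up x z -> y <> z ->
  (exists t, up y t /\ up z t) \/ (prow y = 0 /\ prow z = 0).
Proof.
move=> hy hz yz; have ry := up_row hy; have rz := up_row hz.
have [y0|ypos] := posnP (prow y).
  by right; split; lia.
left.
case/andP: hy => _ /orP [] /andP [/eqP cy ey]; case/andP: hz => _ /orP [] /andP [/eqP cz ez].
- by case: yz; apply: pos_eq; lia.
- by apply: (lconf_aux (x:=x)) => //; lia.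
- have [|||t [h1 h2]] := lconf_aux (x:=x) (y:=z) (z:=y) cz cy _ _ _ ez ey; try lia.
  by exists t.
- by case: yz; apply: pos_eq; lia.
Qed.

Lemma conf k : forall x, prow x <= k -> forall y z, upc x y -> upc x z -> joinable y z.
Proof.
elim: k => [|k IH] x hx y z hy hz.
  have e1 : y = x by apply: row0_upc hy; lia.
  have e2 : z = x by apply: row0_upc hz; lia.
  by left; exists x; rewrite e1 e2; split; apply: upc0.
move: hx hz; case: hy => [x0 hx hz|x1 y1 y' hy1 hy' hx hz].
  by left; exists z; split => //; apply: upc0.
move: hx hy1; case: hz => [x2 hx hy1|x2 z1 z' hz1 hz' hx hy1].
  by left; exists y'; split; [apply: upc0 | apply: upcS hy1 hy'].
have ky : prow y1 <= k by have := up_row hy1; lia.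
have kz : prow z1 <= k by have := up_row hz1; lia.
have [e|ne] := eqVneq y1 z1.
  by subst; apply: IH kz _ _ hy' hz'.
case: (lconf hy1 hz1 (elimN eqP ne)) => [[t [ht1 ht2]] | [r1 r2]].
  case: (IH _ ky _ _ hy' (upc1 ht1)) => [[w [yw tw]] | [ry [r [tr r0]]]].
    case: (IH _ kz _ _ (upcS ht2 tw) hz') => [[w' [ww' zw']] | [[r [wr r0]] rz]].
      by left; exists w'; split => //; apply: upc_trans yw ww'.
    by right; split => //; exists r; split => //; apply: upc_trans yw wr.
  case: (IH _ kz _ _ (upcS ht2 tr) hz') => [[w' [rw' zw']] | [_ rz]].
    have e := row0_upc r0 rw'; subst w'.
    by right; split => //; exists r; split.
  by right.
right; rewrite (row0_upc r1 hy') (row0_upc r2 hz').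
by split; [exists y1 | exists z1]; split => //; apply: upc0.
Qed.

Lemma confl x y z : upc x y -> upc x z -> joinable y z.
Proof. exact: (conf (leqnn (prow x))). Qed.

Lemma reach0_up x y : upc x y -> reach0 x -> reach0 y.
Proof.
move=> xy [r [xr r0]]; case: (confl xy xr) => [[w [yw rw]] | [] //].
have e := row0_upc r0 rw; subst w.
by exists r.
Qed.

Lemma conn_join p q : gz_conn eL eR p q -> joinable p q.
Proof.
move: p; apply: connect_rect.
  by left; exists q; split; apply: upc0.
move=> x z; rewrite adjE => /orP [] h.
  case=> [[w [zw qw]] | [[r [zr r0]] rq]].
    by left; exists w; split => //; apply: upcS h zw.
  by right; split => //; exists r; split => //; apply: upcS h zr.
case=> [[w [zw qw]] | [rz rq]].
  case: (confl (upc1 h) zw) => [[w' [xw' ww']] | [rx [r [wr r0]]]].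
    by left; exists w'; split => //; apply: upc_trans qw ww'.
  by right; split => //; exists r; split => //; apply: upc_trans qw wr.
by right; split => //; apply: reach0_up (upc1 h) rz.
Qed.

Lemma up_val (x z : pos n) : up x z -> a (prow x) (pcol x) = a (prow z) (pcol z).
Proof.
case: HE => _ [_ [H2 _]] hu.
have rz := up_row hu.
have h0 : 0 < prow x by lia.
have [hL hR] := H2 _ _ h0 (posV x).
have e : prow z = (prow x).-1 by lia.
case/andP: hu => _ /orP [] /andP [/eqP cz h]; rewrite e cz.
  by case: (hL h).
by case: (hR h).
Qed.

Lemma conn_val (p q : pos n) : gz_conn eL eR p q -> a (prow p) (pcol p) = a (prow q) (pcol q).
Proof.
move: p; apply: connect_rect => // x z; rewrite adjE => /orP [] h <-.
  exact: up_val.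
by rewrite (up_val h).
Qed.

Lemma claim3 (p q : pos n) : gz_conn eL eR p q -> prow p < prow q -> enc (prow q) (pcol q).
Proof.
rewrite conn_sym => /conn_join [[w [qw pw]] | [[r [qr r0]] _]] lt.
  apply: (upc_enc qw) => e; subst w; have [h _] := upc_row pw; lia.
by apply: (upc_enc qr) => e; subst r; lia.
Qed.

Lemma top_unique (p q : pos n) : gz_conn eL eR p q -> prow p = prow q ->
  (forall r, gz_conn eL eR p r -> prow p <= prow r) -> 0 < prow p -> p = q.
Proof.
move=> pq e hmin hp; case: (conn_join pq) => [[w [pw qw]] | [[r [pr r0]] _]].
  have := hmin _ (upc_conn pw); have [h1 h2] := upc_row pw; have [h3 h4] := upc_row qw.
  move=> h5; rewrite (h2 ltac:(lia)) (h4 ltac:(lia)) //.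
by have := hmin _ (upc_conn pr); lia.
Qed.

Lemma mono0 d j : 0 < j -> j + d <= n -> (a 0 j <= a 0 (j + d))%R.
Proof.
case: HE => [[_ Hint] _] hj; elim: d => [|d IH] hd; first by rewrite addn0.
apply: le_trans (IH ltac:(lia)) _.
have [h1 h2] := Hint 1 (j + d) isT ltac:(rewrite /valid; apply/and3P; split; lia).
by rewrite addnS; apply: le_trans h1 h2.
Qed.

Lemma row0_conn d : forall p q : pos n, prow p = 0 -> prow q = 0 -> pcol p + d = pcol q ->
  a 0 (pcol p) = a 0 (pcol q) -> gz_conn eL eR p q.
Proof.
elim: d => [|d IH] p q p0 q0 hd hv.
  by rewrite (@pos_eq p q) ?p0 ?q0 -?hd ?addn0 //; apply: connect0.
case: HE => _ [_ [_ [_ [H4 _]]]].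
case/and3P: (posV p) => vp1 vp2 vp3; case/and3P: (posV q) => vq1 vq2 vq3.
have hj : 0 < pcol p by [].
have hjn : pcol p < n by lia.
have e : a 0 (pcol p) = a 0 (pcol p).+1.
  apply/eqP; rewrite eq_le; apply/andP; split.
    by have := @mono0 1 (pcol p) hj ltac:(lia); rewrite addn1.
  rewrite hv -hd addnS -addSn; apply: mono0; lia.
case/and3P: (H4 _ hj hjn e) => _ el er.
have [r [r1 rc]] : exists r : pos n, prow r = 1 /\ pcol r = pcol p.
  by apply: mkpos; rewrite /valid; apply/and3P; split; lia.
have [p' [p'0 p'c]] : exists r : pos n, prow r = 0 /\ pcol r = (pcol p).+1.
  by apply: mkpos; rewrite /valid; apply/and3P; split; lia.
have u1 : up r p by rewrite /up p0 r1 rc !eqxx el.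
have u2 : up r p' by rewrite /up p'0 r1 rc p'c !eqxx er orbT.
apply: conn_trans (_ : gz_conn eL eR p r) _; first by rewrite conn_sym; apply: up_conn.
apply: conn_trans (up_conn u2) _.
apply: IH => //; first lia.
by rewrite p'c -e.
Qed.

Lemma claim1 (p q : pos n) : prow p = 0 -> prow q = 0 ->
  gz_conn eL eR p q <-> a (prow p) (pcol p) = a (prow q) (pcol q).
Proof.
move=> p0 q0; split; first exact: conn_val.
rewrite p0 q0.
have [le|lt] := leqP (pcol p) (pcol q).
  by move=> hv; apply: (@row0_conn (pcol q - pcol p)) => //; lia.
move=> hv; rewrite conn_sym; apply: (@row0_conn (pcol p - pcol q)) => //; lia.
Qed.


Definition comp (p : pos n) : {set pos n} := [set q | gz_conn eL eR p q].

Lemma comp_eq (p q : pos n) : comp p = comp q -> gz_conn eL eR p q.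
Proof.
move=> e; have : q \in comp q by rewrite inE; apply: connect0.
by rewrite -e inE.
Qed.

Lemma nenc_min (p : pos n) : ~~ enc (prow p) (pcol p) ->
  0 < prow p /\ (forall r, gz_conn eL eR p r -> prow p <= prow r).
Proof.
move=> hn; split.
  case: HE => _ [H1 _]; case: (posnP (prow p)) => // p0.
  by move: hn; have := H1 (pcol p); rewrite -p0 posV => ->.
move=> r pr; rewrite leqNgt; apply/negP => lt.
by move: hn; rewrite (claim3 (p := r)) // conn_sym.
Qed.

Lemma main :
  (forall p q : pos n, prow p = 0 -> prow q = 0 ->
     gz_conn eL eR p q <-> a (prow p) (pcol p) = a (prow q) (pcol q)) /\
  (forall p : pos n,
     (exists h : pos n, gz_conn eL eR p h /\
        forall q : pos n, gz_conn eL eR p q -> q <> h -> prow h < prow q) \/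
     (exists q : pos n, gz_conn eL eR p q /\ prow q = 0)) /\
  (forall p q : pos n, gz_conn eL eR p q -> prow p < prow q ->
     enc (prow q) (pcol q)) /\
  size (undup [seq lam k | k <- iota 1 n])
    + #|[set p : pos n | ~~ enc (prow p) (pcol p)]|
    <= #|gz_components n eL eR|.
Proof.
split; first exact: claim1.
split.
  move=> p.
  have := @arg_minnP _ p (fun h => gz_conn eL eR p h) (@prow n) (connect0 _ _).
  case=> h ph hmin.
  case: (posnP (prow h)) => h0; first by right; exists h.
  left; exists h; split => // q pq qh.
  have le := hmin _ pq; rewrite ltn_neqAle le andbT; apply/eqP => e.
  apply: qh; apply: esym; apply: top_unique => //.
  - by apply: conn_trans pq; rewrite conn_sym.
  - move=> r hr; apply: hmin; exact: conn_trans ph hr.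
split; first exact: claim3.
set S1 := [set p : pos n | prow p == 0].
set S2 := [set p : pos n | ~~ enc (prow p) (pcol p)].
have hsz : size (undup [seq lam k | k <- iota 1 n]) <= #|comp @: S1|.
  case: HE => [[Htop _] _].
  pose h (v : int) := if [pick p | (prow p == 0) && (a 0 (pcol p) == v)] is Some p
                      then comp p else set0.
  have hspec : forall v, v \in undup [seq lam k | k <- iota 1 n] ->
      exists p, [/\ prow p = 0, a 0 (pcol p) = v & h v = comp p].
    move=> v; rewrite mem_undup => /mapP [k]; rewrite mem_iota => hk ->.
    have [p0 [r0 c0]] : exists p : pos n, prow p = 0 /\ pcol p = n.+1 - k.
      by apply: mkpos; rewrite /valid; apply/and3P; split; lia.
    rewrite /h; case: pickP => [p /andP [/eqP hp0 /eqP hpv] | none].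
      by exists p.
    have := none p0; rewrite r0 c0 eqxx /= Htop; last by lia.
    by rewrite subKn ?eqxx //; lia.
  have hu : uniq (map h (undup [seq lam k | k <- iota 1 n])).
    rewrite map_inj_in_uniq ?undup_uniq // => v v' hv hv' e.
    have [p [p0 pv ev]] := hspec v hv; have [p' [p'0 p'v e']] := hspec v' hv'.
    rewrite ev e' in e; have := conn_val (comp_eq e); rewrite p0 p'0 pv p'v //.
  rewrite cardE -(size_map h); apply: uniq_leq_size hu _.
  move=> C /mapP [v hv ->]; rewrite mem_enum.
  have [p1 [p10 pv ->]] := hspec v hv; apply: imset_f; by rewrite inE p10.
have h2 : #|comp @: S2| = #|S2|.
  apply: card_in_imset => p q; rewrite !inE => hp hq /comp_eq pq.
  have [p0 pm] := nenc_min hp; have [q0 qm] := nenc_min hq.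
  apply: top_unique => //.
  have := pm _ pq; have := qm q; rewrite conn_sym in pq; have := qm _ pq; lia.
have h3 : comp @: S1 :&: comp @: S2 = set0.
  apply/setP => C; rewrite !inE; apply/negP => /andP [/imsetP [p hp ->] /imsetP [q hq /comp_eq pq]].
  move: hp hq; rewrite !inE => /eqP p0 hq.
  have [q0 qm] := nenc_min hq; rewrite conn_sym in pq.
  by have := qm _ pq; lia.
have h4 : comp @: S1 :|: comp @: S2 \subset gz_components n eL eR.
  apply/subsetP => C; rewrite in_setU => /orP [] /imsetP [p _ ->]; by apply/imsetP; exists p.
rewrite -h2; apply: leq_trans (subset_leq_card h4).
by rewrite cardsU h3 cards0 subn0 leq_add2r.
Qed.
End GZ.

Theorem lemma4p1 (n : nat) (lam : nat -> int) (a : nat -> nat -> int)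
    (enc eL eR : nat -> nat -> bool) :
  is_partition n lam ->
  is_enhanced_GZ n lam a enc eL eR ->
  (* (1) row-0 entries are in the same component iff they have the same value *)
  (forall p q : pos n, prow p = 0 -> prow q = 0 ->
     gz_conn eL eR p q <-> a (prow p) (pcol p) = a (prow q) (pcol q)) /\
  (* (2) each component has a unique highest vertex or meets prow 0 *)
  (forall p : pos n,
     (exists h : pos n, gz_conn eL eR p h /\
        forall q : pos n, gz_conn eL eR p q -> q <> h -> prow h < prow q) \/
     (exists q : pos n, gz_conn eL eR p q /\ prow q = 0)) /\
  (* (3) every vertex lying strictly below some vertex of its component
         (i.e. every vertex except possibly the highest) is encircled *)
  (forall p q : pos n, gz_conn eL eR p q -> prow p < prow q ->
     enc (prow q) (pcol q)) /\
  (* in particular: #components >= #distinct values of lambda + #non-encircled *)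
  size (undup [seq lam k | k <- iota 1 n])
    + #|[set p : pos n | ~~ enc (prow p) (pcol p)]|
    <= #|gz_components n eL eR|.
Proof. move=> _ HE; exact: (main HE). Qed.
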